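(* Fix an arm $a$, a time $t$ with $n(\mathcal{T}_{a,t})\ge1$ and $\max\mathcal{T}_{a,t}\le t$, a point $(\hat\theta_a,\hat x_{a,0})\in\Theta\times\mathcal{X}$ and $\gamma\ge0$, and define $$\psi_{a,t}(\gamma)=\max\Big\{\big|g(\theta,h_a^t(x_0))-g(\hat\theta_a,h_a^t(\hat x_{a,0}))\big| : (\theta,x_0)\in\Theta\times\mathcal{X},\ \sum_{t'\in\mathcal{T}_{a,t}}\frac{\big(g(\theta,h_a^{t'}(x_0))-g(\hat\theta_a,h_a^{t'}(\hat x_{a,0}))\big)^2}{2\sigma\,n(\mathcal{T}_{a,t})}\le\gamma\Big\}.$$ Then $\psi_{a,t}(\gamma)\le L_g^2\sqrt{2\sigma\gamma}$.
   Context: Setting: $\Theta\subset\mathbb{R}^{d_\theta}$, $\mathcal{X}\subset\mathbb{R}^{d_x}$ compact convex. For arm $a$, states evolve by known dynamics $x_{s+1}=h_a(x_s,\pi_{a,s})$ along a fixed action sequence, $\pi_{a,s}\in\{0,1\}$; $h_a^s(x_0)$ denotes the state at time $s$ reached from $x_0$. $\mathcal{T}_{a,t}\subseteq\{1,\dots,t\}$ is the set of times up to $t$ at which arm $a$ is selected, $n(\mathcal{T}_{a,t})=|\mathcal{T}_{a,t}|$. $g:\Theta\times\mathcal{X}\to\mathbb{R}$ is $L_g$-bi-Lipschitz: $\frac{1}{L_g}\|u-v\|_2\le|g(u)-g(v)|\le L_g\|u-v\|_2$ for all $u,v\in\Theta\times\mathcal{X}$. The dynamics $h_a(\cdot,b)$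 are $L_h$-Lipschitz in the state with $L_h\le1$. $\sigma>0$ is the sub-Gaussian parameter of the reward distributions. *)

(* Defs.v *)
From HB Require Import structures.
From mathcomp Require Import all_boot all_order all_algebra.
From mathcomp Require Import all_classical all_reals all_analysis.
Set Implicit Arguments. Unset Strict Implicit. Unset Printing Implicit Defensive.
Import Order.TTheory GRing.Theory Num.Theory.
Local Open Scope ring_scope.
Local Open Scope classical_set_scope.

Definition sqnorm2 (R : realType) (n : nat) (v : 'rV[R]_n) : R :=
  \sum_(i < n) (v ord0 i) ^+ 2.

Definition dist2 (R : realType) (m n : nat)
  (u1 : 'rV[R]_m) (v1 : 'rV[R]_n) (u2 : 'rV[R]_m) (v2 : 'rV[R]_n) : R :=
  Num.sqrt (sqnorm2 (u1 - u2) + sqnorm2 (v1 - v2)).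

Definition norm2 (R : realType) (n : nat) (v : 'rV[R]_n) : R :=
  Num.sqrt (sqnorm2 v).

Definition convex_rV (R : realType) (n : nat) (A : set 'rV[R]_n) : Prop :=
  convex_set (A : set (convex_lmodType 'rV[R]_n)).

(* h^s(x0): state at time s from x0 along action sequence pi,
   x_{s+1} = h(x_s, pi s). *)
Fixpoint hiter (R : realType) (n : nat) (h : 'rV[R]_n -> bool -> 'rV[R]_n)
  (pi : nat -> bool) (s : nat) (x0 : 'rV[R]_n) : 'rV[R]_n :=
  match s with
  | O => x0
  | S s' => h (hiter h pi s' x0) (pi s')
  end.

(* psi_{a,t}(gamma), the max being taken as a supremum. *)
Definition psi (R : realType) (dth dx : nat)
  (Theta : set 'rV[R]_dth) (X : set 'rV[R]_dx)
  (g : 'rV[R]_dth -> 'rV[R]_dx -> R)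
  (h : 'rV[R]_dx -> bool -> 'rV[R]_dx) (pi : nat -> bool)
  (T : seq nat) (t : nat) (sigma : R)
  (thhat : 'rV[R]_dth) (xhat : 'rV[R]_dx) (gamma : R) : R :=
  sup [set r : R | exists th x0, Theta th /\ X x0 /\
        \sum_(t' <- T)
          (g th (hiter h pi t' x0) - g thhat (hiter h pi t' xhat)) ^+ 2
          / (2 * sigma * (size T)%:R) <= gamma /\
        r = `| g th (hiter h pi t x0) - g thhat (hiter h pi t xhat) | ].

Definition compact_rV (R : realType) (n : nat) (A : set 'rV[R]_n) : Prop :=
  @compact ('rV[R^o]_n) A.

(* Main.v *)
Require Import Defs.
From HB Require Import structures.
From mathcomp Require Import all_boot all_order all_algebra.
From mathcomp Require Import all_classical all_reals all_analysis.
Import Order.TTheory GRing.Theory Num.Theory.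
Local Open Scope ring_scope.
Local Open Scope classical_set_scope.

Lemma sqnorm2_ge0 (R : realType) n (v : 'rV[R]_n) : 0 <= sqnorm2 v.
Proof. by apply: sumr_ge0 => i _; exact: sqr_ge0. Qed.

Lemma sqnorm2E (R : realType) n (v : 'rV[R]_n) : sqnorm2 v = norm2 v ^+ 2.
Proof. by rewrite /norm2 sqr_sqrtr // sqnorm2_ge0. Qed.

Lemma norm2_ge0 (R : realType) n (v : 'rV[R]_n) : 0 <= norm2 v.
Proof. exact: sqrtr_ge0. Qed.

Lemma dist2_mono (R : realType) m n (u1 u2 : 'rV[R]_m) (a1 a2 b1 b2 : 'rV[R]_n) :
  norm2 (a1 - a2) <= norm2 (b1 - b2) -> dist2 u1 a1 u2 a2 <= dist2 u1 b1 u2 b2.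
Proof.
move=> H; rewrite /dist2; apply: ler_wsqrtr; rewrite lerD2l !sqnorm2E.
by apply: lerXn2r => //; rewrite nnegrE norm2_ge0.
Qed.

Lemma hiter_in (R : realType) n (X : set 'rV[R]_n) h pi s x :
  (forall x b, X x -> X (h x b)) -> X x -> X (hiter h pi s x).
Proof. by move=> hX Xx; elim: s => [|s IH] //=; apply: hX. Qed.

Lemma hiter_mono (R : realType) n (X : set 'rV[R]_n) h pi (Lh : R) x y k s :
  (forall x b, X x -> X (h x b)) -> Lh <= 1 ->
  (forall x y b, X x -> X y -> norm2 (h x b - h y b) <= Lh * norm2 (x - y)) ->
  X x -> X y ->
  norm2 (hiter h pi (s + k) x - hiter h pi (s + k) y) <=
  norm2 (hiter h pi s x - hiter h pi s y).
Proof.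
move=> hX Lh1 hL Xx Xy; elim: k => [|k IH]; first by rewrite addn0.
apply: le_trans IH; rewrite addnS /=.
have := hL _ _ (pi (s + k)) (hiter_in _ _ _ _ pi (s + k) _ hX Xx) (hiter_in _ _ _ _ pi (s + k) _ hX Xy).
move/le_trans; apply.
by rewrite ler_piMl // norm2_ge0.
Qed.

Lemma sum_const_seq (R : realType) (T : seq nat) (c : R) :
  \sum_(i <- T) c = c *+ size T.
Proof. by elim: T => [|a T IH]; rewrite ?big_nil ?big_cons ?IH ?mulrS. Qed.

Theorem lemma1 (R : realType) (dth dx : nat)
  (Theta : set 'rV[R]_dth) (X : set 'rV[R]_dx)
  (g : 'rV[R]_dth -> 'rV[R]_dx -> R) (Lg : R)
  (h : 'rV[R]_dx -> bool -> 'rV[R]_dx) (Lh : R) (pi : nat -> bool)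
  (sigma : R) (T : seq nat) (t : nat)
  (thhat : 'rV[R]_dth) (xhat : 'rV[R]_dx) (gamma : R) :
  compact_rV Theta -> convex_rV Theta ->
  compact_rV X -> convex_rV X ->
  0 < Lg ->
  (forall th1 x1 th2 x2, Theta th1 -> X x1 -> Theta th2 -> X x2 ->
     Lg^-1 * dist2 th1 x1 th2 x2 <= `| g th1 x1 - g th2 x2 | /\
     `| g th1 x1 - g th2 x2 | <= Lg * dist2 th1 x1 th2 x2) ->
  (forall x b, X x -> X (h x b)) ->
  0 <= Lh -> Lh <= 1 ->
  (forall x y b, X x -> X y -> norm2 (h x b - h y b) <= Lh * norm2 (x - y)) ->
  0 < sigma ->
  uniq T -> (1 <= size T)%N -> (forall t', t' \in T -> (1 <= t' <= t)%N) ->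
  Theta thhat -> X xhat -> 0 <= gamma ->
  psi Theta X g h pi T t sigma thhat xhat gamma
    <= Lg ^+ 2 * Num.sqrt (2 * sigma * gamma).
Proof.
move=> _ _ _ _ Lg0 gL hX Lh0 Lh1 hL s0 _ sT Tt Tth Xxh g0.
have B0 : 0 <= Lg ^+ 2 * Num.sqrt (2 * sigma * gamma).
  by rewrite mulr_ge0 ?sqrtr_ge0 // exprn_ge0 // ltW.
rewrite /psi; set S := [set r | _].
have key : ubound S (Lg ^+ 2 * Num.sqrt (2 * sigma * gamma)).
  move=> r [th [x0 [Th [Xx0 [Hsum ->]]]]].
  set e := fun s => g th (hiter h pi s x0) - g thhat (hiter h pi s xhat).
  have pt : forall t', t' \in T -> `|e t| <= Lg ^+ 2 * `|e t'|.
    move=> t' /Tt /andP[_ le]; rewrite -(subnKC le).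
    have [_ H1] := gL _ _ _ _ Th (hiter_in _ _ _ _ pi (t' + (t - t')) _ hX Xx0) Tth
       (hiter_in _ _ _ _ pi (t' + (t - t')) _ hX Xxh).
    have [H2 _] := gL _ _ _ _ Th (hiter_in _ _ _ _ pi t' _ hX Xx0) Tth (hiter_in _ _ _ _ pi t' _ hX Xxh).
    apply: (le_trans H1); rewrite expr2 -mulrA ler_pM2l //.
    have iL : 0 < Lg^-1 by rewrite invr_gt0.
    rewrite -(ler_pM2l iL) mulrA mulVf ?gt_eqF // mul1r.
    apply: le_trans H2; rewrite ler_pM2l ?invr_gt0 //.
    exact: (dist2_mono _ _ _ _ _ _ _ _ _ (hiter_mono _ _ _ _ pi _ _ _ _ _ hX Lh1 hL Xx0 Xxh)).
  have sq : `|e t| ^+ 2 <= Lg ^+ 2 ^+ 2 * (2 * sigma * gamma).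
    have n0 : 0 < (size T)%:R :> R by rewrite ltr0n.
    have c0 : 0 < 2 * sigma * (size T)%:R by rewrite !mulr_gt0.
    rewrite -(ler_pM2r n0) -mulrA.
    have : \sum_(t' <- T) e t' ^+ 2 <= gamma * (2 * sigma * (size T)%:R).
      by rewrite -ler_pdivrMr // mulr_suml.
    move=> Hs; apply: (@le_trans _ _ (Lg ^+ 2 ^+ 2 * \sum_(t' <- T) e t' ^+ 2)).
      rewrite mulr_natr -sum_const_seq mulr_sumr big_seq [X in _ <= X]big_seq.
      apply: ler_sum => i iT.
      apply: (@le_trans _ _ ((Lg ^+ 2 * `|e i|) ^+ 2)).
        apply: lerXn2r; rewrite ?nnegrE ?normr_ge0 //.
          by rewrite mulr_ge0 ?exprn_ge0 ?normr_ge0 // ltW.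
        exact: pt.
      by rewrite exprMn -normrX ger0_norm ?sqr_ge0.
    rewrite -[_ * (size T)%:R]mulrA; apply: ler_wpM2l; first by rewrite !exprn_ge0 // ltW.
    apply: le_trans Hs _.
    by rewrite le_eqVlt; apply/orP; left; apply/eqP; rewrite [gamma * _]mulrC -!mulrA [gamma * _]mulrC.
  have -> : Lg ^+ 2 * Num.sqrt (2 * sigma * gamma) =
      Num.sqrt (Lg ^+ 2 ^+ 2 * (2 * sigma * gamma)).
    by rewrite (@sqrtrM _ (Lg ^+ 2 ^+ 2)) ?sqr_ge0 // sqrtr_sqr ger0_norm // exprn_ge0 // ltW.
  rewrite -[X in X <= _]normr_id -sqrtr_sqr; exact: ler_wsqrtr.
case: (pselect (S !=set0)) => [ne|empty]; first exact: ge_sup.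
have -> : S = set0.
  by apply/seteqP; split => // r Sr; exfalso; apply: empty; exists r.
by rewrite sup0.
Qed.
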